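(* Let $A$ and $B$ be automata and let $(f,n)$ be a normed forward simulation from $A$ to $B$. Then $(A,B)\in f$, i.e., for every execution $\alpha$ of $A$ there is an execution $\alpha'$ of $B$ such that $\alpha$ and $\alpha'$ are $f$-related.
   Context: An automaton $A$ consists of a set $\mathrm{states}(A)$ of states, a nonempty set $\mathrm{start}(A)\subseteq\mathrm{states}(A)$ of start states, a set $\mathrm{acts}(A)$ of actions containing a distinguished internal action $\tau$, and a set $\mathrm{steps}(A)\subseteq\mathrm{states}(A)\times\mathrm{acts}(A)\times\mathrm{states}(A)$ of steps; write $s\xrightarrow{a}_A t$ for $(s,a,t)\in\mathrm{steps}(A)$. An execution fragment of $A$ is a finite or infinite alternating sequence $s_0a_1s_1a_2s_2\cdots$ of states and actions, beginning with a state and, if finite, ending with a state, such that $s_{i-1}\xrightarrow{a_i}_A s_i$ for all $i>0$; its index set $\mathrm{Index}(\alpha)$ is the set of indices $i$ of its states $s_i$. An execution is an execution fragment whose first state is a start state. For a relation $R$ write $R[s]=\{u\mid (s,u)\in R\}$. Execution correspondence: Let $R\subseteq\mathrm{states}(A)\times\mathrm{states}(B)$ and let $\alpha=s_0a_1s_1\cdots$ and $\alpha'=u_0b_1u_1\cdots$ be execution fragments of $A$ and $B$. An index relation over $R$ between $\alpha$ and $\alpha'$ is a relation $I\subseteq\mathrm{Index}(\alpha)\times\mathrm{Index}(\alpha')$ such that (1) $(i,j)\in I$ implies $(s_i,u_j)\in R$; (2) $(i,j)\in I$, $(i',j')\in I$ and $i<i'$ imply $j\le j'$; (3) every index of $\alpha$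 is related by $I$ to some index of $\alpha'$ and every index of $\alpha'$ is related by $I$ to some index of $\alpha$; (4) if $(i,j),(i+1,j+1)\in I$ then $a_{i+1}=b_{j+1}$; if $(i,j),(i+1,j)\in I$ then $a_{i+1}=\tau$; if $(i,j),(i,j+1)\in I$ then $b_{j+1}=\tau$. The fragments $\alpha,\alpha'$ are $R$-related, written $(\alpha,\alpha')\in R$, if such an $I$ exists. Write $(A,B)\in R$ if every execution of $A$ is $R$-related to some execution of $B$. A normed forward simulation from $A$ to $B$ is a pair $(f,n)$ where $f\subseteq\mathrm{states}(A)\times\mathrm{states}(B)$ and $n:\mathrm{steps}(A)\times\mathrm{states}(B)\to S$ for some set $S$ with a well-founded strict order $<$, such that: (1) if $s\in\mathrm{start}(A)$ then $f[s]\cap\mathrm{start}(B)\neq\emptyset$; (2) if $s\xrightarrow{a}_A t$ and $u\in f[s]$ then (a) $u\in f[t]$ and $a=\tau$, or (b) there is $v\in f[t]$ with $u\xrightarrow{a}_B v$, or (c) there is $v\in f[s]$ with $u\xrightarrow{\tau}_B v$ and $n(s\xrightarrow{a}t,v)<n(s\xrightarrow{a}t,u)$. *)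

(* Defs.v *)
From Stdlib Require Import Arith Wellfounded.



(* A common universe of actions [L] with the distinguished internal action
   [tau]; each automaton has its own action set acts(A) (a predicate on L)
   containing tau. *)
Record automaton (L : Type) (tau : L) := Automaton {
  states : Type;
  start : states -> Prop;
  start_nonempty : exists s, start s;
  acts : L -> Prop;
  tau_in_acts : acts tau;
  steps : states -> L -> states -> Prop;
  steps_acts : forall s a t, steps s a t -> acts a
}.

Arguments automaton : clear implicits.
Arguments states {L tau}.
Arguments start {L tau}.
Arguments acts {L tau}.
Arguments steps {L tau}.

(* A finite or infinite alternating sequence s0 a1 s1 a2 s2 ...
   [flen = Some n]: finite, states s_0..s_n (actions a_1..a_n);
   [flen = None]  : infinite.  Values of [fst]/[fact] outside the index set
   are irrelevant. *)
Record fragment (S L : Type) := Fragment {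
  flen : option nat;
  fst : nat -> S;
  fact : nat -> L   (* fact i = a_i, meaningful for 1 <= i in Index *)
}.

Arguments fragment : clear implicits.
Arguments flen {S L}.
Arguments fst {S L}.
Arguments fact {S L}.

Definition in_index {S L} (al : fragment S L) (i : nat) : Prop :=
  match flen al with
  | Some n => i <= n
  | None => True
  end.

Definition is_exec_fragment {L tau} (A : automaton L tau)
  (al : fragment (states A) L) : Prop :=
  forall i, in_index al (S i) ->
    steps A (fst al i) (fact al (S i)) (fst al (S i)).

Definition is_execution {L tau} (A : automaton L tau)
  (al : fragment (states A) L) : Prop :=
  is_exec_fragment A al /\ start A (fst al 0).

Definition index_relation {L} (tau : L) {SA SB : Type} (R : SA -> SB -> Prop)
  (al : fragment SA L) (al' : fragment SB L) (I : nat -> nat -> Prop) : Prop :=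
  (forall i j, I i j -> in_index al i /\ in_index al' j) /\
  (forall i j, I i j -> R (fst al i) (fst al' j)) /\
  (forall i j i' j', I i j -> I i' j' -> i < i' -> j <= j') /\
  (forall i, in_index al i -> exists j, I i j) /\
  (forall j, in_index al' j -> exists i, I i j) /\
  (forall i j, I i j -> I (S i) (S j) -> fact al (S i) = fact al' (S j)) /\
  (forall i j, I i j -> I (S i) j -> fact al (S i) = tau) /\
  (forall i j, I i j -> I i (S j) -> fact al' (S j) = tau).

Definition frag_related {L} (tau : L) {SA SB : Type} (R : SA -> SB -> Prop)
  (al : fragment SA L) (al' : fragment SB L) : Prop :=
  exists I, index_relation tau R al al' I.

Definition aut_related {L tau} (A B : automaton L tau)
  (R : states A -> states B -> Prop) : Prop :=
  forall al, is_execution A al ->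
    exists al', is_execution B al' /\ frag_related tau R al al'.

(* Normed forward simulation (f, n) from A to B, with n valued in a set
   [T] carrying a well-founded strict order [lt].  n is given as a function
   on states(A) x acts x states(A) x states(B); only its values on steps of A
   are ever used. *)
Definition normed_forward_simulation {L tau} (A B : automaton L tau)
  (f : states A -> states B -> Prop)
  (T : Type) (lt : T -> T -> Prop)
  (n : states A -> L -> states A -> states B -> T) : Prop :=
  well_founded lt /\
  (forall s, start A s -> exists u, f s u /\ start B u) /\
  (forall s a t u, steps A s a t -> f s u ->
     (f t u /\ a = tau) \/
     (exists v, f t v /\ steps B u a v) \/
     (exists v, f s v /\ steps B u tau v /\ lt (n s a t v) (n s a t u))).

(* Main.v *)
From Stdlib Require Import ClassicalEpsilon Classical Lia Arith.
Require Import Defs.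

Definition pick (P : nat -> Prop) : nat :=
  match excluded_middle_informative (exists k, P k) with
  | left H => proj1_sig (constructive_indefinite_description _ H)
  | right _ => 0
  end.

Lemma pick_spec P : (exists k, P k) -> P (pick P).
Proof.
  intro H. unfold pick. destruct (excluded_middle_informative _) as [H'|H'].
  - exact (proj2_sig (constructive_indefinite_description _ H')).
  - contradiction.
Qed.

Definition step01 (h : nat -> nat) := forall k, h (S k) = h k \/ h (S k) = S (h k).

Lemma mono01 h : step01 h -> forall k k', k <= k' -> h k <= h k'.
Proof.
  intros Hs k k' Hle. induction Hle; auto.
  destruct (Hs m); lia.
Qed.

Lemma window01 h : step01 h -> forall k j k', h k <= j -> j < h k' ->
  exists m, k <= m < k' /\ h m = j /\ h (S m) = S j.
Proof.
  intros Hs k j k' H1 H2.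
  assert (Hkk : k <= k').
  { destruct (le_lt_dec k k') as [?|Hlt]; auto.
    pose proof (mono01 h Hs k' k ltac:(lia)). lia. }
  induction Hkk as [|k' Hkk IH].
  - lia.
  - destruct (le_lt_dec (S j) (h k')) as [Hc|Hc].
    + destruct (IH Hc) as [m [? ?]]. exists m. split; [lia| tauto].
    + exists k'. destruct (Hs k'); repeat split; lia.
Qed.

Inductive res (SB : Type) := RA | RB (v : SB) | RC (v : SB).
Arguments RA {SB}. Arguments RB {SB}. Arguments RC {SB}.

Definition kind {SB} (g : nat -> SB -> res SB) (idxb : nat -> bool) (c : nat * SB)
  : option (res SB) :=
  if idxb (S (Datatypes.fst c)) then Some (g (Datatypes.fst c) (snd c)) else None.

Definition app {SB} (c : nat * SB) (kd : option (res SB)) : nat * SB :=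
  match kd with
  | None => c
  | Some RA => (S (Datatypes.fst c), snd c)
  | Some (RB v) => (S (Datatypes.fst c), v)
  | Some (RC v) => (Datatypes.fst c, v)
  end.

Fixpoint conf {SB} g idxb (u0 : SB) (k : nat) : nat * SB :=
  match k with
  | 0 => (0, u0)
  | S k => app (conf g idxb u0 k) (kind g idxb (conf g idxb u0 k))
  end.

Definition flag {SB} (kd : option (res SB)) : nat :=
  match kd with Some (RB _) | Some (RC _) => 1 | _ => 0 end.

Fixpoint cnt {SB} g idxb (u0 : SB) (k : nat) : nat :=
  match k with
  | 0 => 0
  | S k => cnt g idxb u0 k + flag (kind g idxb (conf g idxb u0 k))
  end.

Definition iv {SB} g idxb (u0 : SB) k := Datatypes.fst (conf g idxb u0 k).
Definition uv {SB} g idxb (u0 : SB) k := snd (conf g idxb u0 k).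

Lemma iv_step01 {SB} g idxb (u0 : SB) : step01 (iv g idxb u0).
Proof.
  intro k. unfold iv. simpl. destruct (kind g idxb (conf g idxb u0 k)) as [[|v|v]|]; simpl; auto.
Qed.

Lemma cnt_step01 {SB} g idxb (u0 : SB) : step01 (cnt g idxb u0).
Proof.
  intro k. simpl. destruct (kind g idxb (conf g idxb u0 k)) as [[|v|v]|]; simpl; lia.
Qed.

Lemma uv_same {SB} g idxb (u0 : SB) m :
  cnt g idxb u0 (S m) = cnt g idxb u0 m -> uv g idxb u0 (S m) = uv g idxb u0 m.
Proof.
  unfold uv. simpl. destruct (kind g idxb (conf g idxb u0 m)) as [[|v|v]|]; simpl; auto; lia.
Qed.

Lemma uv_cnt {SB} g idxb (u0 : SB) k k' :
  cnt g idxb u0 k = cnt g idxb u0 k' -> uv g idxb u0 k = uv g idxb u0 k'.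
Proof.
  pose proof (cnt_step01 g idxb u0) as Hs.
  assert (Hg : forall k d, cnt g idxb u0 k = cnt g idxb u0 (k + d) ->
                      uv g idxb u0 k = uv g idxb u0 (k + d)).
  { intros k0 d. induction d as [|d IH]; intro H.
    - rewrite Nat.add_0_r; auto.
    - rewrite Nat.add_succ_r in *.
      pose proof (mono01 _ Hs k0 (k0 + d) ltac:(lia)).
      destruct (Hs (k0 + d)) as [E|E]; [|lia].
      rewrite uv_same by auto. apply IH. lia. }
  intro H. destruct (le_lt_dec k k') as [Hl|Hl].
  - replace k' with (k + (k' - k)) by lia. apply Hg. replace (k + (k' - k)) with k' by lia. auto.
  - symmetry. replace k with (k' + (k - k')) by lia. apply Hg. replace (k' + (k - k')) with k by lia. auto.
Qed.



Definition lab {SB L} (tau : L) (a : nat -> L) g idxb (u0 : SB) m : L :=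
  match kind g idxb (conf g idxb u0 m) with
  | Some (RB _) => a (S (iv g idxb u0 m))
  | _ => tau
  end.

Definition Bfrag {SB L} (tau : L) (a : nat -> L) g idxb (u0 : SB) : fragment SB L :=
  Fragment SB L
    (if excluded_middle_informative (exists J, forall k, cnt g idxb u0 k <= J)
     then Some (pick (fun J => (exists k, cnt g idxb u0 k = J) /\ forall k, cnt g idxb u0 k <= J))
     else None)
    (fun j => uv g idxb u0 (pick (fun k => cnt g idxb u0 k = j)))
    (fun j => match j with
              | 0 => tau
              | S j => lab tau a g idxb u0
                  (pick (fun k => cnt g idxb u0 k = j /\ cnt g idxb u0 (S k) = S j))
              end).



Lemma sup_exists (h : nat -> nat) : h 0 = 0 -> forall M, (forall k, h k <= M) ->
  exists J, (exists k, h k = J) /\ forall k, h k <= J.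
Proof.
  intros H0 M. induction M as [|M IH]; intro HM.
  - exists 0. split; eauto. 
  - destruct (classic (exists k, h k = S M)) as [He|Hn].
    + exists (S M); auto.
    + apply IH. intro k. specialize (HM k).
      destruct (Nat.eq_dec (h k) (S M)); [exfalso; eauto|lia].
Qed.

Lemma Bfrag_index {SB L} (tau : L) a g idxb (u0 : SB) j :
  in_index (Bfrag tau a g idxb u0) j <-> exists k, cnt g idxb u0 k = j.
Proof.
  pose proof (cnt_step01 g idxb u0) as Hs.
  unfold in_index, Bfrag; simpl.
  destruct (excluded_middle_informative _) as [Hb|Hb].
  - destruct Hb as [M HM].
    pose proof (pick_spec _ (sup_exists _ eq_refl M HM)) as [[k0 Hk0] Hub].
    set (J := pick _) in *.
    split.
    + intro Hj. destruct (Nat.eq_dec j J). subst; eauto.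
      destruct (window01 _ Hs 0 j k0) as [m Hm]. simpl; lia. lia.
      exists m; tauto.
    + intros [k Hk]. rewrite <- Hk. apply Hub.
  - split; auto. intros _.
    assert (exists k, j < cnt g idxb u0 k) as [k Hk].
    { apply NNPP. intro Hn. apply Hb. exists j. intro k.
      destruct (le_lt_dec (cnt g idxb u0 k) j); auto. exfalso; eauto. }
    destruct (window01 _ Hs 0 j k) as [m Hm]; simpl; try lia. exists m; tauto.
Qed.

Lemma Bfst_eq {SB L} (tau : L) a g idxb (u0 : SB) k :
  fst (Bfrag tau a g idxb u0) (cnt g idxb u0 k) = uv g idxb u0 k.
Proof.
  simpl. apply uv_cnt. apply (pick_spec (fun k' => cnt g idxb u0 k' = cnt g idxb u0 k)). eauto.
Qed.

Lemma Bfact_eq {SB L} (tau : L) a g idxb (u0 : SB) k j :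
  cnt g idxb u0 k = j -> cnt g idxb u0 (S k) = S j ->
  fact (Bfrag tau a g idxb u0) (S j) = lab tau a g idxb u0 k.
Proof.
  intros H1 H2. simpl.
  pose proof (pick_spec (fun k => cnt g idxb u0 k = j /\ cnt g idxb u0 (S k) = S j)
     ltac:(eauto)) as [P1 P2].
  set (p := pick _) in *.
  pose proof (cnt_step01 g idxb u0) as Hs.
  replace p with k; auto.
  destruct (Nat.lt_trichotomy k p) as [Hl|[Hl|Hl]]; auto.
  - pose proof (mono01 _ Hs (S k) p Hl). lia.
  - pose proof (mono01 _ Hs (S p) k Hl). lia.
Qed.

Lemma kind_some {SB} g idxb (u0 : SB) m r :
  kind g idxb (conf g idxb u0 m) = Some r ->
  idxb (S (iv g idxb u0 m)) = true /\ r = g (iv g idxb u0 m) (uv g idxb u0 m).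
Proof.
  unfold kind, iv, uv. destruct (idxb _); intro H; inversion H; auto.
Qed.

Lemma K1 {SB} g idxb (u0 : SB) m :
  cnt g idxb u0 (S m) = S (cnt g idxb u0 m) ->
  (exists v, kind g idxb (conf g idxb u0 m) = Some (RB v) /\
     iv g idxb u0 (S m) = S (iv g idxb u0 m) /\ uv g idxb u0 (S m) = v) \/
  (exists v, kind g idxb (conf g idxb u0 m) = Some (RC v) /\
     iv g idxb u0 (S m) = iv g idxb u0 m /\ uv g idxb u0 (S m) = v).
Proof.
  unfold iv, uv. simpl. destruct (kind g idxb (conf g idxb u0 m)) as [[|v|v]|]; simpl; intro H;
    try lia; eauto.
Qed.

Lemma K2 {SB} g idxb (u0 : SB) m :
  cnt g idxb u0 (S m) = cnt g idxb u0 m ->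
  iv g idxb u0 (S m) = S (iv g idxb u0 m) ->
  kind g idxb (conf g idxb u0 m) = Some RA.
Proof.
  unfold iv, uv. simpl. destruct (kind g idxb (conf g idxb u0 m)) as [[|v|v]|]; simpl; intros H H';
    try lia; auto.
Qed.

Lemma lab_RB {SB L} (tau : L) a g idxb (u0 : SB) m :
  cnt g idxb u0 (S m) = S (cnt g idxb u0 m) ->
  iv g idxb u0 (S m) = S (iv g idxb u0 m) ->
  lab tau a g idxb u0 m = a (S (iv g idxb u0 m)).
Proof.
  intros H1 H2. destruct (K1 g idxb u0 m H1) as [[v [E _]]|[v [E [E' _]]]].
  - unfold lab. rewrite E. auto.
  - lia.
Qed.

Lemma lab_RC {SB L} (tau : L) a g idxb (u0 : SB) m :
  cnt g idxb u0 (S m) = S (cnt g idxb u0 m) ->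
  iv g idxb u0 (S m) = iv g idxb u0 m ->
  lab tau a g idxb u0 m = tau.
Proof.
  intros H1 H2. destruct (K1 g idxb u0 m H1) as [[v [E [E' _]]]|[v [E _]]].
  - lia.
  - unfold lab. rewrite E. auto.
Qed.

Lemma index_rel_gen {SA SB L} (tau : L) (R : SA -> SB -> Prop) (al : fragment SA L)
  g idxb (u0 : SB) :
  (forall k, in_index al (iv g idxb u0 k) /\ R (fst al (iv g idxb u0 k)) (uv g idxb u0 k)) ->
  (forall m, kind g idxb (conf g idxb u0 m) = Some RA -> fact al (S (iv g idxb u0 m)) = tau) ->
  (forall i, in_index al i -> exists k, iv g idxb u0 k = i) ->
  index_relation tau R al (Bfrag tau (fact al) g idxb u0)
    (fun i j => exists k, iv g idxb u0 k = i /\ cnt g idxb u0 k = j).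
Proof.
  intros Hinv HRA Hcov.
  pose proof (cnt_step01 g idxb u0) as Hc.
  pose proof (iv_step01 g idxb u0) as Hi.
  pose proof (mono01 _ Hc) as Mc. pose proof (mono01 _ Hi) as Mi.
  assert (Hlt : forall k k', iv g idxb u0 k < iv g idxb u0 k' -> k < k').
  { intros k k' H. destruct (le_lt_dec k' k) as [H'|H']; auto. specialize (Mi _ _ H'). lia. }
  assert (Hltc : forall k k', cnt g idxb u0 k < cnt g idxb u0 k' -> k < k').
  { intros k k' H. destruct (le_lt_dec k' k) as [H'|H']; auto. specialize (Mc _ _ H'). lia. }
  split; [|split; [|split; [|split; [|split; [|split; [|split]]]]]].
  - intros i j [k [<- <-]]. split. apply Hinv. apply Bfrag_index. eauto.
  - intros i j [k [<- <-]]. rewrite Bfst_eq. apply Hinv.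
  - intros i j i' j' [k [<- <-]] [k' [<- <-]] H. apply Mc. apply Nat.lt_le_incl. auto.
  - intros i H. destruct (Hcov i H) as [k Hk]. exists (cnt g idxb u0 k). eauto.
  - intros j H. apply Bfrag_index in H. destruct H as [k Hk]. exists (iv g idxb u0 k). eauto.
  -
    intros i j [k [Hk1 Hk2]] [k' [Hk1' Hk2']].
    destruct (window01 _ Hc k j k') as [m [Hm1 [Hm2 Hm3]]]; try lia.
    rewrite (Bfact_eq tau (fact al) g idxb u0 m j Hm2 Hm3).
    pose proof (Mi k m ltac:(lia)). pose proof (Mi (S m) k' ltac:(lia)).
    destruct (Hi m) as [E|E].
    + rewrite (lab_RC tau _ g idxb u0 m ltac:(lia) E).
      destruct (window01 _ Hi k i k') as [p [Hp1 [Hp2 Hp3]]]; try lia.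
      pose proof (Mc k p ltac:(lia)). pose proof (Mc (S p) k' ltac:(lia)).
      destruct (Hc p) as [F|F].
      * rewrite <- Hp2. apply HRA. apply K2; auto. lia.
      * exfalso. destruct (Nat.lt_trichotomy p m) as [Hl|[Hl|Hl]].
        -- pose proof (Mc (S p) m Hl). lia.
        -- subst. lia.
        -- pose proof (Mc (S m) p Hl). lia.
    + rewrite (lab_RB tau _ g idxb u0 m ltac:(lia) E). f_equal. lia.
  -
    intros i j [k [Hk1 Hk2]] [k' [Hk1' Hk2']].
    destruct (window01 _ Hi k i k') as [p [Hp1 [Hp2 Hp3]]]; try lia.
    pose proof (Mc k p ltac:(lia)). pose proof (Mc (S p) k' ltac:(lia)).
    pose proof (Mc p (S p) ltac:(lia)).
    rewrite <- Hp2. apply HRA. apply K2; auto. lia. lia.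
  -
    intros i j [k [Hk1 Hk2]] [k' [Hk1' Hk2']].
    destruct (window01 _ Hc k j k') as [m [Hm1 [Hm2 Hm3]]]; try lia.
    rewrite (Bfact_eq tau (fact al) g idxb u0 m j Hm2 Hm3).
    pose proof (Mi k m ltac:(lia)). pose proof (Mi (S m) k' ltac:(lia)).
    pose proof (Mi m (S m) ltac:(lia)).
    apply lab_RC. lia. lia.
Qed.

Lemma conf_S {SB} g idxb (u0 : SB) k :
  conf g idxb u0 (S k) = app (conf g idxb u0 k) (kind g idxb (conf g idxb u0 k)).
Proof. reflexivity. Qed.

Theorem mainTheorem1 (L : Type) (tau : L) (A B : automaton L tau)
  (f : states A -> states B -> Prop) (T : Type) (lt : T -> T -> Prop)
  (n : states A -> L -> states A -> states B -> T) :
  normed_forward_simulation A B f T lt n ->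
  aut_related A B f.
Proof.
  intros [Hwf [Hst Hsim]] al [Hexec Hstart].
  destruct (Hst _ Hstart) as [u0 [Hf0 Hu0]].
  pose (valid := fun s a t u (r : res (states B)) => match r with
     | RA => f t u /\ a = tau
     | RB v => f t v /\ steps B u a v
     | RC v => f s v /\ steps B u tau v /\ lt (n s a t v) (n s a t u) end).
  assert (Hch : forall s a t u, exists r, steps A s a t -> f s u -> valid s a t u r).
  { intros s a t u. destruct (classic (steps A s a t /\ f s u)) as [[H1 H2]|Hn].
    - destruct (Hsim _ _ _ _ H1 H2) as [[? ?]|[[v [? ?]]|[v [? [? ?]]]]];
        [exists RA|exists (RB v)|exists (RC v)]; simpl; auto.
    - exists RA. intros; tauto. }
  pose (chf := fun s a t u => proj1_sig (constructive_indefinite_description _ (Hch s a t u))).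
  assert (Hchf : forall s a t u, steps A s a t -> f s u -> valid s a t u (chf s a t u)).
  { intros s a t u. exact (proj2_sig (constructive_indefinite_description _ (Hch s a t u))). }
  clearbody chf.
  pose (g := fun i u => chf (fst al i) (fact al (S i)) (fst al (S i)) u).
  pose (idxb := fun i => if excluded_middle_informative (in_index al i) then true else false).
  assert (Hidx : forall i, idxb i = true <-> in_index al i).
  { intro i. unfold idxb. destruct (excluded_middle_informative _); split; intros; auto; try discriminate; contradiction. }
  assert (Hdown : forall i, in_index al (S i) -> in_index al i).
  { intro i. unfold in_index. destruct (flen al); auto; lia. }
  assert (Hinv : forall k, in_index al (iv g idxb u0 k) /\ f (fst al (iv g idxb u0 k)) (uv g idxb u0 k)).
  { induction k as [|k [IH1 IH2]].
    - unfold iv, uv; simpl. split; auto. unfold in_index. destruct (flen al); auto. apply le_0_n.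
    - unfold iv, uv. rewrite conf_S.
      destruct (kind g idxb (conf g idxb u0 k)) as [r|] eqn:E.
      + destruct (kind_some g idxb u0 k r E) as [Hb Hr].
        apply Hidx in Hb.
        pose proof (Hchf _ _ _ _ (Hexec _ Hb) IH2) as V.
        fold (g (iv g idxb u0 k) (uv g idxb u0 k)) in V. rewrite <- Hr in V.
        destruct r as [|v|v]; simpl in V |- *; unfold iv, uv in *; tauto.
      + simpl. auto. }
  assert (HRA : forall m, kind g idxb (conf g idxb u0 m) = Some RA ->
                     fact al (S (iv g idxb u0 m)) = tau).
  { intros m E. destruct (kind_some g idxb u0 m RA E) as [Hb Hr].
    apply Hidx in Hb.
    pose proof (Hchf _ _ _ _ (Hexec _ Hb) (proj2 (Hinv m))) as V.
    fold (g (iv g idxb u0 m) (uv g idxb u0 m)) in V. rewrite <- Hr in V. simpl in V. tauto. }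
  assert (Hcov : forall i, in_index al i -> exists k, iv g idxb u0 k = i).
  { induction i as [|i IH]; intro Hi.
    - exists 0. reflexivity.
    - destruct (IH (Hdown _ Hi)) as [k0 Hk0].
      assert (Hw : forall x k, iv g idxb u0 k = i ->
                n (fst al i) (fact al (S i)) (fst al (S i)) (uv g idxb u0 k) = x ->
                exists k', iv g idxb u0 k' = S i).
      { intro x. induction x as [x IHx] using (well_founded_induction Hwf).
        intros k Hk Hx.
        assert (E : kind g idxb (conf g idxb u0 k) = Some (g i (uv g idxb u0 k))).
        { unfold kind. fold (iv g idxb u0 k). rewrite Hk.
          replace (idxb (S i)) with true by (symmetry; apply Hidx; auto). reflexivity. }
        pose proof (Hchf _ _ _ _ (Hexec _ Hi) ltac:(rewrite <- Hk; apply (proj2 (Hinv k)))) as V.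
        fold (g i (uv g idxb u0 k)) in V.
        destruct (g i (uv g idxb u0 k)) as [|v|v] eqn:Eg.
        - exists (S k). unfold iv. rewrite conf_S, E. simpl. fold (iv g idxb u0 k). auto.
        - exists (S k). unfold iv. rewrite conf_S, E. simpl. fold (iv g idxb u0 k). auto.
        - simpl in V. destruct V as [_ [_ Vlt]].
          apply (IHx (n (fst al i) (fact al (S i)) (fst al (S i)) v)) with (k := S k).
          + subst x. exact Vlt.
          + unfold iv. rewrite conf_S, E. simpl. fold (iv g idxb u0 k). auto.
          + unfold uv. rewrite conf_S, E. reflexivity. }
      eapply Hw; eauto. }
  exists (Bfrag tau (fact al) g idxb u0). split.
  - split.
    + intros j Hj. apply Bfrag_index in Hj. destruct Hj as [k Hk].
      destruct (window01 _ (cnt_step01 g idxb u0) 0 j k) as [m [Hm1 [Hm2 Hm3]]];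
        [simpl; lia| lia|].
      rewrite <- Hm2 at 1. rewrite Bfst_eq.
      rewrite <- Hm3. rewrite Bfst_eq.
      rewrite Hm3. rewrite (Bfact_eq tau (fact al) g idxb u0 m j Hm2 Hm3).
      pose proof (proj2 (Hinv m)) as Hfm.
      destruct (K1 g idxb u0 m ltac:(lia)) as [[v [E [_ Ev]]]|[v [E [_ Ev]]]];
        destruct (kind_some g idxb u0 m _ E) as [Hb Hr]; apply Hidx in Hb;
        pose proof (Hchf _ _ _ _ (Hexec _ Hb) Hfm) as V;
        fold (g (iv g idxb u0 m) (uv g idxb u0 m)) in V; rewrite <- Hr in V; simpl in V;
        unfold lab; rewrite E, Ev; tauto.
    + change 0 with (cnt g idxb u0 0). rewrite Bfst_eq. exact Hu0.
  - eexists. apply index_rel_gen; auto.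
Qed.
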